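(* For every integer $m\ge1$: (i) $\mu_{m,i}(k_1,k_2,k_3,k_4)\in(k_1,k_2,k_3)\,\mathbb{Z}[k_1,k_2,k_3,k_4]$ for $i=1,2,3$; (ii) $\mu_{m,4}(k_1,k_2,k_3,k_4)\in k_4^{m^2}+(k_1,k_2,k_3)^2\,\mathbb{Z}[k_1,k_2,k_3,k_4]$.
   Context: Let $C/\mathbb{Q}$ be the genus $2$ curve $y^2=x^5+f_4x^4+f_3x^3+f_2x^2+f_1x+f_0$ with $f_i\in\mathbb{Z}$, $J$ its Jacobian, and $\kappa\colon J\to\mathbb{P}^3$ Flynn's Kummer map $[(x_1,y_1)+(x_2,y_2)-2\infty]\mapsto[1:x_1+x_2:x_1x_2:\beta_0]$ (so the identity maps to $[0:0:0:1]$). Let $\delta_1,\dots,\delta_4\in\mathbb{Z}[k_1,\dots,k_4]$ be Flynn's explicit quartic duplication polynomials for this Kummer surface (Cassels–Flynn, Appendix C of Flynn), and $B_{ij}$ the explicit integral biquadratic forms of Cassels–Flynn for this Kummer surface. Uchida's polynomials $\mu_{m,i}\in\mathbb{Z}[k_1,\dots,k_4]$ are defined by $\mu_{0,1}=\mu_{0,2}=\mu_{0,3}=0$, $\mu_{0,4}=1$, $\mu_{1,i}=k_i$, $\mu_{2m,i}=\delta_i(\mu_m)$ and $\mu_{2m+1,i}k_i=B_{ii}(\mu_{m+1},\mu_m)$ for $m\ge1$, where $\mu_m=(\mu_{m,1},\dots,\mu_{m,4})$. *)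

(* Defs.v *)
From HB Require Import structures.
From mathcomp Require Import all_boot all_order all_algebra.
From mathcomp.multinomials Require Import mpoly.

Set Implicit Arguments.
Unset Strict Implicit.
Unset Printing Implicit Defensive.

Import Order.TTheory GRing.Theory Num.Theory.
Local Open Scope ring_scope.

(* Curve  C : y^2 = x^5 + f4 x^4 + f3 x^3 + f2 x^2 + f1 x + f0,  f_i in Z.   *)
(* (Sextic model with f5 = 1, f6 = 0.)                                       *)

Definition quintic (f0 f1 f2 f3 f4 : int) : {poly rat} :=
  'X^5 + (f4%:~R)%:P * 'X^4 + (f3%:~R)%:P * 'X^3 + (f2%:~R)%:P * 'X^2
  + (f1%:~R)%:P * 'X + (f0%:~R)%:P.

Definition genus2_quintic (f0 f1 f2 f3 f4 : int) : Prop :=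
  coprimep (quintic f0 f1 f2 f3 f4) (quintic f0 f1 f2 f3 f4)^`().

Section Forms.
Variable R : comNzRingType.

(* Flynn's Kummer surface equation  K = K2 k4^2 + K1 k4 + K0  (f5=1, f6=0). *)
Definition Kummer (f0 f1 f2 f3 f4 : int) (k1 k2 k3 k4 : R) : R :=
  let F0 : R := f0%:~R in let F1 : R := f1%:~R in let F2 : R := f2%:~R in
  let F3 : R := f3%:~R in let F4 : R := f4%:~R in
  (k2 ^+ 2 - 4 * k1 * k3) * k4 ^+ 2
  - 2 * (2 * F0 * k1 ^+ 3 + F1 * k1 ^+ 2 * k2 + 2 * F2 * k1 ^+ 2 * k3
         + F3 * k1 * k2 * k3 + 2 * F4 * k1 * k3 ^+ 2 + k2 * k3 ^+ 2) * k4
  + ((F1 ^+ 2 - 4 * F0 * F2) * k1 ^+ 4 - 4 * F0 * F3 * k1 ^+ 3 * k2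
     - 2 * F1 * F3 * k1 ^+ 3 * k3 - 4 * F0 * F4 * k1 ^+ 2 * k2 ^+ 2
     + 4 * (F0 - F1 * F4) * k1 ^+ 2 * k2 * k3
     + (F3 ^+ 2 + 2 * F1 - 4 * F2 * F4) * k1 ^+ 2 * k3 ^+ 2
     - 4 * F0 * k1 * k2 ^+ 3 - 4 * F1 * k1 * k2 ^+ 2 * k3
     - 4 * F2 * k1 * k2 * k3 ^+ 2 - 2 * F3 * k1 * k3 ^+ 3 + k3 ^+ 4).

(* The Cassels--Flynn biquadratic forms B_ij (for f5 = 1, f6 = 0), in the    *)
(* normalisation B_ij(k, (0,0,0,1)) = k_i k_j; B11 is the classical          *)
(* (k1 l4 - k2 l3 + k3 l2 - k4 l1)^2.  Only B_ii and B_i4 are needed.        *)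
Definition B11 (f0 f1 f2 f3 f4 : int) (k1 k2 k3 k4 l1 l2 l3 l4 : R) : R :=
  let F0 : R := f0%:~R in let F1 : R := f1%:~R in let F2 : R := f2%:~R in
  let F3 : R := f3%:~R in let F4 : R := f4%:~R in
    k1 * k1 * l4 * l4
    - 2 * k1 * k2 * l3 * l4
    + 2 * k1 * k3 * l2 * l4
    - 2 * k1 * k4 * l1 * l4
    + k2 * k2 * l3 * l3
    - 2 * k2 * k3 * l2 * l3
    + 2 * k2 * k4 * l1 * l3
    + k3 * k3 * l2 * l2
    - 2 * k3 * k4 * l1 * l2
    + k4 * k4 * l1 * l1.

Definition B22 (f0 f1 f2 f3 f4 : int) (k1 k2 k3 k4 l1 l2 l3 l4 : R) : R :=
  let F0 : R := f0%:~R in let F1 : R := f1%:~R in let F2 : R := f2%:~R in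
  let F3 : R := f3%:~R in let F4 : R := f4%:~R in
    2 * F1 ^+ 2 * k1 * k1 * l1 * l1
    - 8 * F0 * F2 * k1 * k1 * l1 * l1
    - 4 * F0 * F3 * k1 * k1 * l1 * l2
    - 2 * F1 * F3 * k1 * k1 * l1 * l3
    - 4 * F0 * k1 * k1 * l1 * l4
    - 4 * F0 * F4 * k1 * k1 * l2 * l2
    - 4 * F1 * F4 * k1 * k1 * l2 * l3
    - 4 * F0 * k1 * k1 * l2 * l3
    - 2 * F1 * k1 * k1 * l2 * l4
    + F3 ^+ 2 * k1 * k1 * l3 * l3
    - 4 * F2 * F4 * k1 * k1 * l3 * l3
    - 2 * F1 * k1 * k1 * l3 * l3
    - 4 * F2 * k1 * k1 * l3 * l4
    - 4 * F0 * F3 * k1 * k2 * l1 * l1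
    + 8 * F0 * k1 * k2 * l1 * l3
    - 4 * F0 * k1 * k2 * l2 * l2
    - 4 * F1 * k1 * k2 * l2 * l3
    - 4 * F2 * k1 * k2 * l3 * l3
    - 2 * F3 * k1 * k2 * l3 * l4
    - 2 * F1 * F3 * k1 * k3 * l1 * l1
    + 8 * F0 * k1 * k3 * l1 * l2
    + 8 * F1 * k1 * k3 * l1 * l3
    + 2 * F3 * k1 * k3 * l2 * l4
    - 2 * F3 * k1 * k3 * l3 * l3
    - 4 * F0 * k1 * k4 * l1 * l1
    - 2 * F3 * k1 * k4 * l2 * l3
    - 4 * F4 * k1 * k4 * l3 * l3
    - 4 * k1 * k4 * l3 * l4
    - 4 * F0 * F4 * k2 * k2 * l1 * l1
    - 4 * F0 * k2 * k2 * l1 * l2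
    + k2 * k2 * l4 * l4
    - 4 * F1 * F4 * k2 * k3 * l1 * l1
    - 4 * F0 * k2 * k3 * l1 * l1
    - 4 * F1 * k2 * k3 * l1 * l2
    - 2 * F3 * k2 * k3 * l1 * l4
    - 2 * F1 * k2 * k4 * l1 * l1
    + 2 * F3 * k2 * k4 * l1 * l3
    - 2 * k2 * k4 * l3 * l3
    + F3 ^+ 2 * k3 * k3 * l1 * l1
    - 4 * F2 * F4 * k3 * k3 * l1 * l1
    - 2 * F1 * k3 * k3 * l1 * l1
    - 4 * F2 * k3 * k3 * l1 * l2
    - 2 * F3 * k3 * k3 * l1 * l3
    - 4 * F4 * k3 * k3 * l1 * l4
    - 2 * k3 * k3 * l2 * l4
    + 2 * k3 * k3 * l3 * l3
    - 4 * F2 * k3 * k4 * l1 * l1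
    - 2 * F3 * k3 * k4 * l1 * l2
    - 4 * k3 * k4 * l1 * l4
    + k4 * k4 * l2 * l2.

Definition B33 (f0 f1 f2 f3 f4 : int) (k1 k2 k3 k4 l1 l2 l3 l4 : R) : R :=
  let F0 : R := f0%:~R in let F1 : R := f1%:~R in let F2 : R := f2%:~R in
  let F3 : R := f3%:~R in let F4 : R := f4%:~R in
    F1 ^+ 2 * k1 * k1 * l2 * l2
    - 4 * F0 * F2 * k1 * k1 * l2 * l2
    - 4 * F0 * F3 * k1 * k1 * l2 * l3
    - 4 * F0 * F4 * k1 * k1 * l3 * l3
    - 4 * F0 * k1 * k1 * l3 * l4
    - 2 * F1 ^+ 2 * k1 * k2 * l1 * l2
    + 8 * F0 * F2 * k1 * k2 * l1 * l2
    + 4 * F0 * F3 * k1 * k2 * l1 * l3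
    + 4 * F0 * k1 * k2 * l2 * l4
    - 4 * F0 * k1 * k2 * l3 * l3
    + 4 * F0 * F3 * k1 * k3 * l1 * l2
    + 8 * F0 * F4 * k1 * k3 * l1 * l3
    + 4 * F0 * k1 * k3 * l1 * l4
    + 4 * F0 * k1 * k3 * l2 * l3
    + 2 * F1 * k1 * k3 * l2 * l4
    + 4 * F0 * k1 * k4 * l1 * l3
    - 4 * F0 * k1 * k4 * l2 * l2
    - 2 * F1 * k1 * k4 * l2 * l3
    + F1 ^+ 2 * k2 * k2 * l1 * l1
    - 4 * F0 * F2 * k2 * k2 * l1 * l1
    - 4 * F0 * k2 * k2 * l1 * l4
    - 4 * F0 * F3 * k2 * k3 * l1 * l1
    + 4 * F0 * k2 * k3 * l1 * l3
    - 2 * F1 * k2 * k3 * l1 * l4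
    + 4 * F0 * k2 * k4 * l1 * l2
    + 2 * F1 * k2 * k4 * l1 * l3
    - 4 * F0 * F4 * k3 * k3 * l1 * l1
    - 4 * F0 * k3 * k3 * l1 * l2
    + k3 * k3 * l4 * l4
    - 4 * F0 * k3 * k4 * l1 * l1
    - 2 * k3 * k4 * l3 * l4
    + k4 * k4 * l3 * l3.

Definition B44 (f0 f1 f2 f3 f4 : int) (k1 k2 k3 k4 l1 l2 l3 l4 : R) : R :=
  let F0 : R := f0%:~R in let F1 : R := f1%:~R in let F2 : R := f2%:~R in
  let F3 : R := f3%:~R in let F4 : R := f4%:~R in
    F1 ^+ 2 * F3 ^+ 2 * k1 * k1 * l1 * l1
    - 4 * F1 ^+ 2 * F2 * F4 * k1 * k1 * l1 * l1
    - 2 * F1 ^+ 3 * k1 * k1 * l1 * l1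
    - 4 * F0 * F2 * F3 ^+ 2 * k1 * k1 * l1 * l1
    + 16 * F0 * F2 ^+ 2 * F4 * k1 * k1 * l1 * l1
    - 8 * F0 * F1 * F3 * F4 * k1 * k1 * l1 * l1
    + 8 * F0 * F1 * F2 * k1 * k1 * l1 * l1
    + 16 * F0 ^+ 2 * F4 ^+ 2 * k1 * k1 * l1 * l1
    - 16 * F0 ^+ 2 * F3 * k1 * k1 * l1 * l1
    - 4 * F1 ^+ 2 * F2 * k1 * k1 * l1 * l2
    + 16 * F0 * F2 ^+ 2 * k1 * k1 * l1 * l2
    - 8 * F0 * F1 * F3 * k1 * k1 * l1 * l2
    + 16 * F0 ^+ 2 * F4 * k1 * k1 * l1 * l2
    - 2 * F1 ^+ 2 * F3 * k1 * k1 * l1 * l3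
    + 8 * F0 * F2 * F3 * k1 * k1 * l1 * l3
    + 16 * F0 ^+ 2 * k1 * k1 * l1 * l3
    - 4 * F1 ^+ 2 * F4 * k1 * k1 * l1 * l4
    - 4 * F0 * F3 ^+ 2 * k1 * k1 * l1 * l4
    + 16 * F0 * F2 * F4 * k1 * k1 * l1 * l4
    - 2 * F1 ^+ 2 * k1 * k1 * l2 * l4
    + 8 * F0 * F2 * k1 * k1 * l2 * l4
    + 2 * F1 ^+ 2 * k1 * k1 * l3 * l3
    - 8 * F0 * F2 * k1 * k1 * l3 * l3
    - 4 * F1 ^+ 2 * F2 * k1 * k2 * l1 * l1
    + 16 * F0 * F2 ^+ 2 * k1 * k2 * l1 * l1
    - 8 * F0 * F1 * F3 * k1 * k2 * l1 * l1
    + 16 * F0 ^+ 2 * F4 * k1 * k2 * l1 * l1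
    - 2 * F1 ^+ 2 * F3 * k1 * k2 * l1 * l2
    + 8 * F0 * F2 * F3 * k1 * k2 * l1 * l2
    + 16 * F0 ^+ 2 * k1 * k2 * l1 * l2
    + 4 * F0 * F3 ^+ 2 * k1 * k2 * l1 * l3
    + 8 * F0 * F1 * k1 * k2 * l1 * l3
    - 4 * F1 ^+ 2 * k1 * k2 * l1 * l4
    + 16 * F0 * F2 * k1 * k2 * l1 * l4
    + 4 * F0 * F3 * k1 * k2 * l2 * l4
    - 4 * F0 * F3 * k1 * k2 * l3 * l3
    - 2 * F1 ^+ 2 * F3 * k1 * k3 * l1 * l1
    + 8 * F0 * F2 * F3 * k1 * k3 * l1 * l1
    + 16 * F0 ^+ 2 * k1 * k3 * l1 * l1
    + 4 * F0 * F3 ^+ 2 * k1 * k3 * l1 * l2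
    + 8 * F0 * F1 * k1 * k3 * l1 * l2
    + 8 * F1 ^+ 2 * k1 * k3 * l1 * l3
    + 8 * F0 * F3 * F4 * k1 * k3 * l1 * l3
    - 16 * F0 * F2 * k1 * k3 * l1 * l3
    + 8 * F0 * F3 * k1 * k3 * l1 * l4
    + 2 * F1 * F3 * k1 * k3 * l2 * l4
    - 2 * F1 * F3 * k1 * k3 * l3 * l3
    - 4 * F1 ^+ 2 * F4 * k1 * k4 * l1 * l1
    - 4 * F0 * F3 ^+ 2 * k1 * k4 * l1 * l1
    + 16 * F0 * F2 * F4 * k1 * k4 * l1 * l1
    - 4 * F1 ^+ 2 * k1 * k4 * l1 * l2
    + 16 * F0 * F2 * k1 * k4 * l1 * l2
    + 8 * F0 * F3 * k1 * k4 * l1 * l3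
    - 2 * F1 * F3 * k1 * k4 * l1 * l4
    + 8 * F0 * F4 * k1 * k4 * l1 * l4
    + 4 * F0 * k1 * k4 * l2 * l4
    - 4 * F0 * k1 * k4 * l3 * l3
    + F1 ^+ 2 * k2 * k2 * l2 * l2
    - 4 * F0 * F2 * k2 * k2 * l2 * l2
    - 4 * F0 * F3 * k2 * k2 * l2 * l3
    - 4 * F0 * F4 * k2 * k2 * l3 * l3
    - 4 * F0 * k2 * k2 * l3 * l4
    - 4 * F0 * F3 * k2 * k3 * l2 * l2
    - 2 * F1 * F3 * k2 * k3 * l2 * l3
    - 8 * F0 * F4 * k2 * k3 * l2 * l3
    - 4 * F0 * k2 * k3 * l2 * l4
    - 4 * F1 * F4 * k2 * k3 * l3 * l3
    - 4 * F0 * k2 * k3 * l3 * l3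
    - 4 * F1 * k2 * k3 * l3 * l4
    - 2 * F1 ^+ 2 * k2 * k4 * l1 * l1
    + 8 * F0 * F2 * k2 * k4 * l1 * l1
    + 4 * F0 * F3 * k2 * k4 * l1 * l2
    + 2 * F1 * F3 * k2 * k4 * l1 * l3
    + 4 * F0 * k2 * k4 * l1 * l4
    - 4 * F0 * k2 * k4 * l2 * l3
    - 2 * F1 * k2 * k4 * l3 * l3
    + 2 * F1 ^+ 2 * k3 * k3 * l1 * l1
    - 8 * F0 * F2 * k3 * k3 * l1 * l1
    - 4 * F0 * F3 * k3 * k3 * l1 * l2
    - 2 * F1 * F3 * k3 * k3 * l1 * l3
    - 4 * F0 * k3 * k3 * l1 * l4
    - 4 * F0 * F4 * k3 * k3 * l2 * l2
    - 4 * F1 * F4 * k3 * k3 * l2 * l3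
    - 4 * F0 * k3 * k3 * l2 * l3
    - 2 * F1 * k3 * k3 * l2 * l4
    + F3 ^+ 2 * k3 * k3 * l3 * l3
    - 4 * F2 * F4 * k3 * k3 * l3 * l3
    - 2 * F1 * k3 * k3 * l3 * l3
    - 4 * F2 * k3 * k3 * l3 * l4
    - 4 * F0 * k3 * k4 * l2 * l2
    - 4 * F1 * k3 * k4 * l2 * l3
    - 4 * F2 * k3 * k4 * l3 * l3
    - 2 * F3 * k3 * k4 * l3 * l4
    + k4 * k4 * l4 * l4.

Definition B14 (f0 f1 f2 f3 f4 : int) (k1 k2 k3 k4 l1 l2 l3 l4 : R) : R :=
  let F0 : R := f0%:~R in let F1 : R := f1%:~R in let F2 : R := f2%:~R in
  let F3 : R := f3%:~R in let F4 : R := f4%:~R in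
    2 * F1 ^+ 2 * F4 * k1 * k1 * l1 * l1
    + 2 * F0 * F3 ^+ 2 * k1 * k1 * l1 * l1
    - 8 * F0 * F2 * F4 * k1 * k1 * l1 * l1
    + 2 * F1 ^+ 2 * k1 * k1 * l1 * l2
    - 8 * F0 * F2 * k1 * k1 * l1 * l2
    - 4 * F0 * F3 * k1 * k1 * l1 * l3
    + F1 * F3 * k1 * k1 * l1 * l4
    - 4 * F0 * F4 * k1 * k1 * l1 * l4
    - 2 * F0 * k1 * k1 * l2 * l4
    + 2 * F0 * k1 * k1 * l3 * l3
    + 2 * F1 ^+ 2 * k1 * k2 * l1 * l1
    - 8 * F0 * F2 * k1 * k2 * l1 * l1
    - 4 * F0 * F3 * k1 * k2 * l1 * l2
    - F1 * F3 * k1 * k2 * l1 * l3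
    - 4 * F0 * F4 * k1 * k2 * l1 * l3
    - 6 * F0 * k1 * k2 * l1 * l4
    - 2 * F0 * k1 * k2 * l2 * l3
    - F1 * k1 * k2 * l2 * l4
    - 4 * F0 * F3 * k1 * k3 * l1 * l1
    - F1 * F3 * k1 * k3 * l1 * l2
    - 4 * F0 * F4 * k1 * k3 * l1 * l2
    - 4 * F1 * F4 * k1 * k3 * l1 * l3
    + 4 * F0 * k1 * k3 * l1 * l3
    - 2 * F1 * k1 * k3 * l1 * l4
    - 2 * F0 * k1 * k3 * l2 * l2
    - 2 * F1 * k1 * k3 * l2 * l3
    - 2 * F2 * k1 * k3 * l2 * l4
    - F3 * k1 * k3 * l3 * l4
    + F1 * F3 * k1 * k4 * l1 * l1
    - 4 * F0 * F4 * k1 * k4 * l1 * l1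
    - 6 * F0 * k1 * k4 * l1 * l2
    - 2 * F1 * k1 * k4 * l1 * l3
    + 2 * F2 * k1 * k4 * l1 * l4
    + k1 * k4 * l4 * l4
    - 2 * F0 * k2 * k2 * l1 * l3
    + 2 * F0 * k2 * k2 * l2 * l2
    + F1 * k2 * k2 * l2 * l3
    - 2 * F0 * k2 * k3 * l1 * l2
    - 2 * F1 * k2 * k3 * l1 * l3
    + F1 * k2 * k3 * l2 * l2
    + 2 * F2 * k2 * k3 * l2 * l3
    + F3 * k2 * k3 * l3 * l3
    - 2 * F0 * k2 * k4 * l1 * l1
    - F1 * k2 * k4 * l1 * l2
    - 2 * F2 * k2 * k4 * l1 * l3
    - k2 * k4 * l3 * l4
    + 2 * F0 * k3 * k3 * l1 * l1
    + F3 * k3 * k3 * l2 * l3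
    + 2 * F4 * k3 * k3 * l3 * l3
    + 2 * k3 * k3 * l3 * l4
    - F3 * k3 * k4 * l1 * l3
    - k3 * k4 * l2 * l4
    + 2 * k3 * k4 * l3 * l3
    + k4 * k4 * l1 * l4.

Definition B24 (f0 f1 f2 f3 f4 : int) (k1 k2 k3 k4 l1 l2 l3 l4 : R) : R :=
  let F0 : R := f0%:~R in let F1 : R := f1%:~R in let F2 : R := f2%:~R in
  let F3 : R := f3%:~R in let F4 : R := f4%:~R in
    - F1 ^+ 2 * F3 * k1 * k1 * l1 * l1
    + 4 * F0 * F2 * F3 * k1 * k1 * l1 * l1
    + 8 * F0 ^+ 2 * k1 * k1 * l1 * l1
    + 2 * F0 * F3 ^+ 2 * k1 * k1 * l1 * l2
    + 4 * F0 * F1 * k1 * k1 * l1 * l2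
    + 4 * F1 ^+ 2 * k1 * k1 * l1 * l3
    + 4 * F0 * F3 * F4 * k1 * k1 * l1 * l3
    - 8 * F0 * F2 * k1 * k1 * l1 * l3
    + 4 * F0 * F3 * k1 * k1 * l1 * l4
    + F1 * F3 * k1 * k1 * l2 * l4
    - F1 * F3 * k1 * k1 * l3 * l3
    + 2 * F0 * F3 ^+ 2 * k1 * k2 * l1 * l1
    + 4 * F0 * F1 * k1 * k2 * l1 * l1
    + 2 * F1 ^+ 2 * k1 * k2 * l1 * l2
    + 4 * F0 * F3 * F4 * k1 * k2 * l1 * l2
    + 4 * F1 * F2 * k1 * k2 * l1 * l3
    + 8 * F0 * F4 ^+ 2 * k1 * k2 * l1 * l3
    - 8 * F0 * F3 * k1 * k2 * l1 * l3
    + F1 * F3 * k1 * k2 * l1 * l4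
    + 4 * F0 * F4 * k1 * k2 * l1 * l4
    + 2 * F0 * F3 * k1 * k2 * l2 * l2
    + F1 * F3 * k1 * k2 * l2 * l3
    + 4 * F0 * F4 * k1 * k2 * l2 * l3
    + 2 * F1 * F4 * k1 * k2 * l2 * l4
    + 4 * F0 * k1 * k2 * l3 * l3
    + 2 * F1 * k1 * k2 * l3 * l4
    + 4 * F1 ^+ 2 * k1 * k3 * l1 * l1
    + 4 * F0 * F3 * F4 * k1 * k3 * l1 * l1
    - 8 * F0 * F2 * k1 * k3 * l1 * l1
    + 4 * F1 * F2 * k1 * k3 * l1 * l2
    + 8 * F0 * F4 ^+ 2 * k1 * k3 * l1 * l2
    - 8 * F0 * F3 * k1 * k3 * l1 * l2
    + F3 ^+ 3 * k1 * k3 * l1 * l3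
    - 4 * F2 * F3 * F4 * k1 * k3 * l1 * l3
    + 8 * F2 ^+ 2 * k1 * k3 * l1 * l3
    + 8 * F1 * F4 ^+ 2 * k1 * k3 * l1 * l3
    - 8 * F1 * F3 * k1 * k3 * l1 * l3
    + 4 * F1 * F4 * k1 * k3 * l1 * l4
    - 4 * F0 * k1 * k3 * l1 * l4
    + 4 * F0 * F4 * k1 * k3 * l2 * l2
    + 4 * F1 * F4 * k1 * k3 * l2 * l3
    + 4 * F0 * k1 * k3 * l2 * l3
    - F3 ^+ 2 * k1 * k3 * l2 * l4
    + 4 * F2 * F4 * k1 * k3 * l2 * l4
    + 4 * F1 * k1 * k3 * l3 * l3
    + 4 * F2 * k1 * k3 * l3 * l4
    + 4 * F0 * F3 * k1 * k4 * l1 * l1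
    + F1 * F3 * k1 * k4 * l1 * l2
    + 4 * F0 * F4 * k1 * k4 * l1 * l2
    + 4 * F1 * F4 * k1 * k4 * l1 * l3
    - 4 * F0 * k1 * k4 * l1 * l3
    + 2 * F1 * k1 * k4 * l1 * l4
    + 2 * F0 * k1 * k4 * l2 * l2
    + 2 * F1 * k1 * k4 * l2 * l3
    + 2 * F2 * k1 * k4 * l2 * l4
    + F3 * k1 * k4 * l3 * l4
    + 2 * F0 * F3 * k2 * k2 * l1 * l2
    + 4 * F0 * F4 * k2 * k2 * l1 * l3
    + 2 * F0 * k2 * k2 * l1 * l4
    + 2 * F0 * k2 * k2 * l2 * l3
    + F1 * k2 * k2 * l2 * l4
    + F1 * F3 * k2 * k3 * l1 * l2
    + 4 * F0 * F4 * k2 * k3 * l1 * l2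
    + 4 * F1 * F4 * k2 * k3 * l1 * l3
    + 4 * F0 * k2 * k3 * l1 * l3
    + 2 * F1 * k2 * k3 * l1 * l4
    + 2 * F0 * k2 * k3 * l2 * l2
    + 2 * F1 * k2 * k3 * l2 * l3
    + 2 * F2 * k2 * k3 * l2 * l4
    + F3 * k2 * k3 * l3 * l4
    + F1 * F3 * k2 * k4 * l1 * l1
    + 2 * F1 * F4 * k2 * k4 * l1 * l2
    - F3 ^+ 2 * k2 * k4 * l1 * l3
    + 4 * F2 * F4 * k2 * k4 * l1 * l3
    + 2 * F2 * k2 * k4 * l1 * l4
    + F1 * k2 * k4 * l2 * l2
    + 2 * F2 * k2 * k4 * l2 * l3
    + F3 * k2 * k4 * l2 * l4
    + F3 * k2 * k4 * l3 * l3
    + 2 * F4 * k2 * k4 * l3 * l4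
    + k2 * k4 * l4 * l4
    - F1 * F3 * k3 * k3 * l1 * l1
    + 4 * F0 * k3 * k3 * l1 * l2
    + 4 * F1 * k3 * k3 * l1 * l3
    + F3 * k3 * k3 * l2 * l4
    - F3 * k3 * k3 * l3 * l3
    + 2 * F1 * k3 * k4 * l1 * l2
    + 4 * F2 * k3 * k4 * l1 * l3
    + F3 * k3 * k4 * l1 * l4
    + F3 * k3 * k4 * l2 * l3
    + 2 * F4 * k3 * k4 * l2 * l4
    + 2 * k3 * k4 * l3 * l4
    + k4 * k4 * l2 * l4.

Definition B34 (f0 f1 f2 f3 f4 : int) (k1 k2 k3 k4 l1 l2 l3 l4 : R) : R :=
  let F0 : R := f0%:~R in let F1 : R := f1%:~R in let F2 : R := f2%:~R in
  let F3 : R := f3%:~R in let F4 : R := f4%:~R in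
    2 * F1 ^+ 2 * F2 * k1 * k1 * l1 * l1
    - 8 * F0 * F2 ^+ 2 * k1 * k1 * l1 * l1
    + 4 * F0 * F1 * F3 * k1 * k1 * l1 * l1
    - 8 * F0 ^+ 2 * F4 * k1 * k1 * l1 * l1
    + F1 ^+ 2 * F3 * k1 * k1 * l1 * l2
    - 4 * F0 * F2 * F3 * k1 * k1 * l1 * l2
    - 8 * F0 ^+ 2 * k1 * k1 * l1 * l2
    - 2 * F0 * F3 ^+ 2 * k1 * k1 * l1 * l3
    - 4 * F0 * F1 * k1 * k1 * l1 * l3
    + 2 * F1 ^+ 2 * k1 * k1 * l1 * l4
    - 8 * F0 * F2 * k1 * k1 * l1 * l4
    - 2 * F0 * F3 * k1 * k1 * l2 * l4
    + 2 * F0 * F3 * k1 * k1 * l3 * l3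
    + F1 ^+ 2 * F3 * k1 * k2 * l1 * l1
    - 4 * F0 * F2 * F3 * k1 * k2 * l1 * l1
    - 8 * F0 ^+ 2 * k1 * k2 * l1 * l1
    + 2 * F1 ^+ 2 * F4 * k1 * k2 * l1 * l2
    - 8 * F0 * F2 * F4 * k1 * k2 * l1 * l2
    - 4 * F0 * F1 * k1 * k2 * l1 * l2
    - 2 * F1 ^+ 2 * k1 * k2 * l1 * l3
    - 4 * F0 * F3 * F4 * k1 * k2 * l1 * l3
    - 4 * F0 * F3 * k1 * k2 * l1 * l4
    + F1 ^+ 2 * k1 * k2 * l2 * l2
    - 4 * F0 * F2 * k1 * k2 * l2 * l2
    - 4 * F0 * F3 * k1 * k2 * l2 * l3
    - 4 * F0 * F4 * k1 * k2 * l2 * l4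
    - 4 * F0 * k1 * k2 * l3 * l4
    - 2 * F0 * F3 ^+ 2 * k1 * k3 * l1 * l1
    - 4 * F0 * F1 * k1 * k3 * l1 * l1
    - 2 * F1 ^+ 2 * k1 * k3 * l1 * l2
    - 4 * F0 * F3 * F4 * k1 * k3 * l1 * l2
    - 4 * F1 * F2 * k1 * k3 * l1 * l3
    - 8 * F0 * F4 ^+ 2 * k1 * k3 * l1 * l3
    + 8 * F0 * F3 * k1 * k3 * l1 * l3
    - F1 * F3 * k1 * k3 * l1 * l4
    - 4 * F0 * F4 * k1 * k3 * l1 * l4
    - 2 * F0 * F3 * k1 * k3 * l2 * l2
    - F1 * F3 * k1 * k3 * l2 * l3
    - 4 * F0 * F4 * k1 * k3 * l2 * l3
    - 2 * F1 * F4 * k1 * k3 * l2 * l4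
    - 4 * F0 * k1 * k3 * l3 * l3
    - 2 * F1 * k1 * k3 * l3 * l4
    + 2 * F1 ^+ 2 * k1 * k4 * l1 * l1
    - 8 * F0 * F2 * k1 * k4 * l1 * l1
    - 4 * F0 * F3 * k1 * k4 * l1 * l2
    - F1 * F3 * k1 * k4 * l1 * l3
    - 4 * F0 * F4 * k1 * k4 * l1 * l3
    - 6 * F0 * k1 * k4 * l1 * l4
    - 2 * F0 * k1 * k4 * l2 * l3
    - F1 * k1 * k4 * l2 * l4
    + F1 ^+ 2 * k2 * k2 * l1 * l2
    - 4 * F0 * F2 * k2 * k2 * l1 * l2
    - 2 * F0 * F3 * k2 * k2 * l1 * l3
    - 2 * F0 * k2 * k2 * l2 * l4
    + 2 * F0 * k2 * k2 * l3 * l3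
    - 4 * F0 * F3 * k2 * k3 * l1 * l2
    - F1 * F3 * k2 * k3 * l1 * l3
    - 4 * F0 * F4 * k2 * k3 * l1 * l3
    - 2 * F0 * k2 * k3 * l1 * l4
    + 2 * F0 * k2 * k3 * l2 * l3
    - F1 * k2 * k3 * l2 * l4
    + 2 * F1 * k2 * k3 * l3 * l3
    - 2 * F0 * F3 * k2 * k4 * l1 * l1
    - 4 * F0 * F4 * k2 * k4 * l1 * l2
    - 2 * F1 * F4 * k2 * k4 * l1 * l3
    - F1 * k2 * k4 * l1 * l4
    - 2 * F0 * k2 * k4 * l2 * l2
    - F1 * k2 * k4 * l2 * l3
    + 2 * F0 * F3 * k3 * k3 * l1 * l1
    - 4 * F0 * k3 * k3 * l1 * l3
    + 2 * F0 * k3 * k3 * l2 * l2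
    + 2 * F1 * k3 * k3 * l2 * l3
    + 2 * F2 * k3 * k3 * l3 * l3
    + F3 * k3 * k3 * l3 * l4
    - 4 * F0 * k3 * k4 * l1 * l2
    - 2 * F1 * k3 * k4 * l1 * l3
    + F3 * k3 * k4 * l3 * l3
    + 2 * F4 * k3 * k4 * l3 * l4
    + k3 * k4 * l4 * l4
    + k4 * k4 * l3 * l4.

End Forms.

Arguments Kummer {R}.
Arguments B11 {R}. Arguments B22 {R}. Arguments B33 {R}. Arguments B44 {R}.
Arguments B14 {R}. Arguments B24 {R}. Arguments B34 {R}.

(* Vectors of length 4 are functions 'I_4 -> R; index i : 'I_4 stands for  *)
(* the paper's index i+1.                                                   *)
Definition c4 {R : comNzRingType} (x : 'I_4 -> R) (n : nat) : R := x (inord n).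

Definition Bdiag {R : comNzRingType} (f0 f1 f2 f3 f4 : int) (i : 'I_4)
  (x y : 'I_4 -> R) : R :=
  let B := match nat_of_ord i with
           | 0 => B11 | 1 => B22 | 2 => B33 | _ => B44 end in
  B f0 f1 f2 f3 f4 (c4 x 0) (c4 x 1) (c4 x 2) (c4 x 3)
                   (c4 y 0) (c4 y 1) (c4 y 2) (c4 y 3).

(* Duplication quartics: delta_i(k) = 2 B_i4(k,k) (i=1,2,3),               *)
(* delta_4(k) = B_44(k,k).  This is a duplication map on the Kummer surface *)
(* with delta(0,0,0,1) = (0,0,0,1); Flynn's delta agrees with it modulo the *)
(* Kummer equation, which is all that matters below.         *)
Definition delta {R : comNzRingType} (f0 f1 f2 f3 f4 : int) (i : 'I_4)
  (x : 'I_4 -> R) : R :=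
  match nat_of_ord i with
  | 0 => 2 * B14 f0 f1 f2 f3 f4 (c4 x 0) (c4 x 1) (c4 x 2) (c4 x 3)
                                (c4 x 0) (c4 x 1) (c4 x 2) (c4 x 3)
  | 1 => 2 * B24 f0 f1 f2 f3 f4 (c4 x 0) (c4 x 1) (c4 x 2) (c4 x 3)
                                (c4 x 0) (c4 x 1) (c4 x 2) (c4 x 3)
  | 2 => 2 * B34 f0 f1 f2 f3 f4 (c4 x 0) (c4 x 1) (c4 x 2) (c4 x 3)
                                (c4 x 0) (c4 x 1) (c4 x 2) (c4 x 3)
  | _ => B44 f0 f1 f2 f3 f4 (c4 x 0) (c4 x 1) (c4 x 2) (c4 x 3)
                            (c4 x 0) (c4 x 1) (c4 x 2) (c4 x 3)
  end.

(* The polynomial ring Z[k1,k2,k3,k4] = {mpoly int[4]}, k_{i+1} = 'X_i.      *)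
Notation ZK := {mpoly int[4]}.

Definition kvar (n : nat) : ZK := 'X_(inord n).

Definition KummerZ (f0 f1 f2 f3 f4 : int) : ZK :=
  Kummer f0 f1 f2 f3 f4 (kvar 0) (kvar 1) (kvar 2) (kvar 3).

Definition congK (f0 f1 f2 f3 f4 : int) (p q : ZK) : Prop :=
  exists g : ZK, p - q = g * KummerZ f0 f1 f2 f3 f4.

(* Uchida's polynomials: mu m i is mu_{m,i+1}.  The recursive relations are *)
(* imposed modulo the Kummer equation.              *)
Definition uchida_seq (f0 f1 f2 f3 f4 : int) (mu : nat -> 'I_4 -> ZK) : Prop :=
  [/\ forall i : 'I_4, mu 0%N i = (if nat_of_ord i == 3%N then 1 else 0),
      forall i : 'I_4, mu 1%N i = 'X_i,
      forall (m : nat) (i : 'I_4), (1 <= m)%N ->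
        congK f0 f1 f2 f3 f4 (mu m.*2 i) (delta f0 f1 f2 f3 f4 i (mu m))
    & forall (m : nat) (i : 'I_4), (1 <= m)%N ->
        congK f0 f1 f2 f3 f4 (mu m.*2.+1 i * 'X_i)
              (Bdiag f0 f1 f2 f3 f4 i (mu m.+1) (mu m))].

Definition in_I (p : ZK) : Prop :=
  exists a : 'I_3 -> ZK, p = \sum_(j < 3) a j * kvar j.

Definition in_I2 (p : ZK) : Prop :=
  exists a : 'I_3 -> 'I_3 -> ZK,
    p = \sum_(j < 3) \sum_(l < 3) a j l * (kvar j * kvar l).

(* Main.v *)
Require Import Defs.
From HB Require Import structures.
From mathcomp Require Import all_boot all_order all_algebra.
From mathcomp.multinomials Require Import mpoly.
From mathcomp Require Import ring zify.
Set Implicit Arguments.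
Unset Strict Implicit.
Unset Printing Implicit Defensive.
Import Order.TTheory GRing.Theory Num.Theory.
Local Open Scope ring_scope.

Section Dec.
Variable R : comNzRingType.
Lemma B11_dec (f0 f1 f2 f3 f4 : int) (k1 k2 k3 k4 l1 l2 l3 l4 : R) :
  B11 f0 f1 f2 f3 f4 k1 k2 k3 k4 l1 l2 l3 l4 =
  k1 * k1 * (l4 * l4)
  + k1 * k2 * ((-2) * l3 * l4)
  + k1 * k3 * (2 * l2 * l4)
  + k1 * l1 * ((-2) * k4 * l4)
  + k2 * k2 * (l3 * l3)
  + k2 * k3 * ((-2) * l2 * l3)
  + k2 * l1 * (2 * k4 * l3)
  + k3 * k3 * (l2 * l2)
  + k3 * l1 * ((-2) * k4 * l2)
  + l1 * l1 * (k4 * k4).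
Proof. rewrite /B11 /=; ring. Qed.

Lemma B22_dec (f0 f1 f2 f3 f4 : int) (k1 k2 k3 k4 l1 l2 l3 l4 : R) :
  B22 f0 f1 f2 f3 f4 k1 k2 k3 k4 l1 l2 l3 l4 =
  k1 * k1 * (2 * (f1%:~R) * (f1%:~R) * l1 * l1 + (-8) * (f0%:~R) * (f2%:~R) * l1 * l1 + (-4) * (f0%:~R) * (f3%:~R) * l1 * l2 + (-2) * (f1%:~R) * (f3%:~R) * l1 * l3 + (-4) * (f0%:~R) * l1 * l4 + (-4) * (f0%:~R) * (f4%:~R) * l2 * l2 + (-4) * (f1%:~R) * (f4%:~R) * l2 * l3 + (-4) * (f0%:~R) * l2 * l3 + (-2) * (f1%:~R) * l2 * l4 + (f3%:~R) * (f3%:~R) * l3 * l3 + (-4) * (f2%:~R) * (f4%:~R) * l3 * l3 + (-2) * (f1%:~R) * l3 * l3 + (-4) * (f2%:~R) * l3 * l4)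
  + k1 * k2 * ((-4) * (f0%:~R) * (f3%:~R) * l1 * l1 + 8 * (f0%:~R) * l1 * l3 + (-4) * (f0%:~R) * l2 * l2 + (-4) * (f1%:~R) * l2 * l3 + (-4) * (f2%:~R) * l3 * l3 + (-2) * (f3%:~R) * l3 * l4)
  + k1 * k3 * ((-2) * (f1%:~R) * (f3%:~R) * l1 * l1 + 8 * (f0%:~R) * l1 * l2 + 8 * (f1%:~R) * l1 * l3 + 2 * (f3%:~R) * l2 * l4 + (-2) * (f3%:~R) * l3 * l3)
  + k1 * l1 * ((-4) * (f0%:~R) * k4 * l1)
  + k1 * l2 * ((-2) * (f3%:~R) * k4 * l3)
  + k1 * l3 * ((-4) * (f4%:~R) * k4 * l3 + (-4) * k4 * l4)
  + k2 * k2 * ((-4) * (f0%:~R) * (f4%:~R) * l1 * l1 + (-4) * (f0%:~R) * l1 * l2 + l4 * l4)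
  + k2 * k3 * ((-4) * (f1%:~R) * (f4%:~R) * l1 * l1 + (-4) * (f0%:~R) * l1 * l1 + (-4) * (f1%:~R) * l1 * l2 + (-2) * (f3%:~R) * l1 * l4)
  + k2 * l1 * ((-2) * (f1%:~R) * k4 * l1 + 2 * (f3%:~R) * k4 * l3)
  + k2 * l3 * ((-2) * k4 * l3)
  + k3 * k3 * ((f3%:~R) * (f3%:~R) * l1 * l1 + (-4) * (f2%:~R) * (f4%:~R) * l1 * l1 + (-2) * (f1%:~R) * l1 * l1 + (-4) * (f2%:~R) * l1 * l2 + (-2) * (f3%:~R) * l1 * l3 + (-4) * (f4%:~R) * l1 * l4 + (-2) * l2 * l4 + 2 * l3 * l3)
  + k3 * l1 * ((-4) * (f2%:~R) * k4 * l1 + (-2) * (f3%:~R) * k4 * l2 + (-4) * k4 * l4)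
  + l2 * l2 * (k4 * k4).
Proof. rewrite /B22 /=; ring. Qed.

Lemma B33_dec (f0 f1 f2 f3 f4 : int) (k1 k2 k3 k4 l1 l2 l3 l4 : R) :
  B33 f0 f1 f2 f3 f4 k1 k2 k3 k4 l1 l2 l3 l4 =
  k1 * k1 * ((f1%:~R) * (f1%:~R) * l2 * l2 + (-4) * (f0%:~R) * (f2%:~R) * l2 * l2 + (-4) * (f0%:~R) * (f3%:~R) * l2 * l3 + (-4) * (f0%:~R) * (f4%:~R) * l3 * l3 + (-4) * (f0%:~R) * l3 * l4)
  + k1 * k2 * ((-2) * (f1%:~R) * (f1%:~R) * l1 * l2 + 8 * (f0%:~R) * (f2%:~R) * l1 * l2 + 4 * (f0%:~R) * (f3%:~R) * l1 * l3 + 4 * (f0%:~R) * l2 * l4 + (-4) * (f0%:~R) * l3 * l3)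
  + k1 * k3 * (4 * (f0%:~R) * (f3%:~R) * l1 * l2 + 8 * (f0%:~R) * (f4%:~R) * l1 * l3 + 4 * (f0%:~R) * l1 * l4 + 4 * (f0%:~R) * l2 * l3 + 2 * (f1%:~R) * l2 * l4)
  + k1 * l1 * (4 * (f0%:~R) * k4 * l3)
  + k1 * l2 * ((-4) * (f0%:~R) * k4 * l2 + (-2) * (f1%:~R) * k4 * l3)
  + k2 * k2 * ((f1%:~R) * (f1%:~R) * l1 * l1 + (-4) * (f0%:~R) * (f2%:~R) * l1 * l1 + (-4) * (f0%:~R) * l1 * l4)
  + k2 * k3 * ((-4) * (f0%:~R) * (f3%:~R) * l1 * l1 + 4 * (f0%:~R) * l1 * l3 + (-2) * (f1%:~R) * l1 * l4)
  + k2 * l1 * (4 * (f0%:~R) * k4 * l2 + 2 * (f1%:~R) * k4 * l3)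
  + k3 * k3 * ((-4) * (f0%:~R) * (f4%:~R) * l1 * l1 + (-4) * (f0%:~R) * l1 * l2 + l4 * l4)
  + k3 * l1 * ((-4) * (f0%:~R) * k4 * l1)
  + k3 * l3 * ((-2) * k4 * l4)
  + l3 * l3 * (k4 * k4).
Proof. rewrite /B33 /=; ring. Qed.

Lemma B44_dec (f0 f1 f2 f3 f4 : int) (k1 k2 k3 k4 l1 l2 l3 l4 : R) :
  B44 f0 f1 f2 f3 f4 k1 k2 k3 k4 l1 l2 l3 l4 =
  k4 * k4 * l4 * l4 + (k1 * k1 * ((f1%:~R) * (f1%:~R) * (f3%:~R) * (f3%:~R) * l1 * l1 + (-4) * (f1%:~R) * (f1%:~R) * (f2%:~R) * (f4%:~R) * l1 * l1 + (-2) * (f1%:~R) * (f1%:~R) * (f1%:~R) * l1 * l1 + (-4) * (f0%:~R) * (f2%:~R) * (f3%:~R) * (f3%:~R) * l1 * l1 + 16 * (f0%:~R) * (f2%:~R) * (f2%:~R) * (f4%:~R) * l1 * l1 + (-8) * (f0%:~R) * (f1%:~R) * (f3%:~R) * (f4%:~R) * l1 * l1 + 8 * (f0%:~R) * (f1%:~R) * (f2%:~R) * l1 * l1 + 16 * (f0%:~R) * (f0%:~R) * (f4%:~R) * (f4%:~R) * l1 * l1 + (-16) * (f0%:~R) * (f0%:~R) * (f3%:~R) * l1 * l1 + (-4) * (f1%:~R) * (f1%:~R) * (f2%:~R) * l1 * l2 + 16 * (f0%:~R) * (f2%:~R) * (f2%:~R) * l1 * l2 + (-8) * (f0%:~R)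 * (f1%:~R) * (f3%:~R) * l1 * l2 + 16 * (f0%:~R) * (f0%:~R) * (f4%:~R) * l1 * l2 + (-2) * (f1%:~R) * (f1%:~R) * (f3%:~R) * l1 * l3 + 8 * (f0%:~R) * (f2%:~R) * (f3%:~R) * l1 * l3 + 16 * (f0%:~R) * (f0%:~R) * l1 * l3 + (-4) * (f1%:~R) * (f1%:~R) * (f4%:~R) * l1 * l4 + (-4) * (f0%:~R) * (f3%:~R) * (f3%:~R) * l1 * l4 + 16 * (f0%:~R) * (f2%:~R) * (f4%:~R) * l1 * l4 + (-2) * (f1%:~R) * (f1%:~R) * l2 * l4 + 8 * (f0%:~R) * (f2%:~R) * l2 * l4 + 2 * (f1%:~R) * (f1%:~R) * l3 * l3 + (-8) * (f0%:~R) * (f2%:~R) * l3 * l3)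
  + k1 * k2 * ((-4) * (f1%:~R) * (f1%:~R) * (f2%:~R) * l1 * l1 + 16 * (f0%:~R) * (f2%:~R) * (f2%:~R) * l1 * l1 + (-8) * (f0%:~R) * (f1%:~R) * (f3%:~R) * l1 * l1 + 16 * (f0%:~R) * (f0%:~R) * (f4%:~R) * l1 * l1 + (-2) * (f1%:~R) * (f1%:~R) * (f3%:~R) * l1 * l2 + 8 * (f0%:~R) * (f2%:~R) * (f3%:~R) * l1 * l2 + 16 * (f0%:~R) * (f0%:~R) * l1 * l2 + 4 * (f0%:~R) * (f3%:~R) * (f3%:~R) * l1 * l3 + 8 * (f0%:~R) * (f1%:~R) * l1 * l3 + (-4) * (f1%:~R) * (f1%:~R) * l1 * l4 + 16 * (f0%:~R) * (f2%:~R) * l1 * l4 + 4 * (f0%:~R) * (f3%:~R) * l2 * l4 + (-4) * (f0%:~R) * (f3%:~R) * l3 * l3)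
  + k1 * k3 * ((-2) * (f1%:~R) * (f1%:~R) * (f3%:~R) * l1 * l1 + 8 * (f0%:~R) * (f2%:~R) * (f3%:~R) * l1 * l1 + 16 * (f0%:~R) * (f0%:~R) * l1 * l1 + 4 * (f0%:~R) * (f3%:~R) * (f3%:~R) * l1 * l2 + 8 * (f0%:~R) * (f1%:~R) * l1 * l2 + 8 * (f1%:~R) * (f1%:~R) * l1 * l3 + 8 * (f0%:~R) * (f3%:~R) * (f4%:~R) * l1 * l3 + (-16) * (f0%:~R) * (f2%:~R) * l1 * l3 + 8 * (f0%:~R) * (f3%:~R) * l1 * l4 + 2 * (f1%:~R) * (f3%:~R) * l2 * l4 + (-2) * (f1%:~R) * (f3%:~R) * l3 * l3)
  + k1 * l1 * ((-4) * (f1%:~R) * (f1%:~R) * (f4%:~R) * k4 * l1 + (-4) * (f0%:~R) * (f3%:~R) * (f3%:~R) * k4 * l1 + 16 * (f0%:~R) * (f2%:~R) * (f4%:~R) * k4 * l1 + (-4) * (f1%:~R) * (f1%:~R) * k4 * l2 + 16 * (f0%:~R) * (f2%:~R) * k4 * l2 + 8 * (f0%:~R) * (f3%:~R) * k4 * l3 + (-2) * (f1%:~R) * (f3%:~R) * k4 * l4 + 8 * (f0%:~R) * (f4%:~R) * k4 * l4)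
  + k1 * l2 * (4 * (f0%:~R) * k4 * l4)
  + k1 * l3 * ((-4) * (f0%:~R) * k4 * l3)
  + k2 * k2 * ((f1%:~R) * (f1%:~R) * l2 * l2 + (-4) * (f0%:~R) * (f2%:~R) * l2 * l2 + (-4) * (f0%:~R) * (f3%:~R) * l2 * l3 + (-4) * (f0%:~R) * (f4%:~R) * l3 * l3 + (-4) * (f0%:~R) * l3 * l4)
  + k2 * k3 * ((-4) * (f0%:~R) * (f3%:~R) * l2 * l2 + (-2) * (f1%:~R) * (f3%:~R) * l2 * l3 + (-8) * (f0%:~R) * (f4%:~R) * l2 * l3 + (-4) * (f0%:~R) * l2 * l4 + (-4) * (f1%:~R) * (f4%:~R) * l3 * l3 + (-4) * (f0%:~R) * l3 * l3 + (-4) * (f1%:~R) * l3 * l4)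
  + k2 * l1 * ((-2) * (f1%:~R) * (f1%:~R) * k4 * l1 + 8 * (f0%:~R) * (f2%:~R) * k4 * l1 + 4 * (f0%:~R) * (f3%:~R) * k4 * l2 + 2 * (f1%:~R) * (f3%:~R) * k4 * l3 + 4 * (f0%:~R) * k4 * l4)
  + k2 * l2 * ((-4) * (f0%:~R) * k4 * l3)
  + k2 * l3 * ((-2) * (f1%:~R) * k4 * l3)
  + k3 * k3 * (2 * (f1%:~R) * (f1%:~R) * l1 * l1 + (-8) * (f0%:~R) * (f2%:~R) * l1 * l1 + (-4) * (f0%:~R) * (f3%:~R) * l1 * l2 + (-2) * (f1%:~R) * (f3%:~R) * l1 * l3 + (-4) * (f0%:~R) * l1 * l4 + (-4) * (f0%:~R) * (f4%:~R) * l2 * l2 + (-4) * (f1%:~R) * (f4%:~R) * l2 * l3 + (-4) * (f0%:~R) * l2 * l3 + (-2) * (f1%:~R) * l2 * l4 + (f3%:~R) * (f3%:~R) * l3 * l3 + (-4) * (f2%:~R) * (f4%:~R) * l3 * l3 + (-2) * (f1%:~R) * l3 * l3 + (-4) * (f2%:~R) * l3 * l4)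
  + k3 * l2 * ((-4) * (f0%:~R) * k4 * l2 + (-4) * (f1%:~R) * k4 * l3)
  + k3 * l3 * ((-4) * (f2%:~R) * k4 * l3 + (-2) * (f3%:~R) * k4 * l4)).
Proof. rewrite /B44 /=; ring. Qed.

Lemma B14_dec (f0 f1 f2 f3 f4 : int) (k1 k2 k3 k4 l1 l2 l3 l4 : R) :
  B14 f0 f1 f2 f3 f4 k1 k2 k3 k4 l1 l2 l3 l4 =
  k1 * (2 * (f1%:~R) * (f1%:~R) * (f4%:~R) * k1 * l1 * l1 + 2 * (f0%:~R) * (f3%:~R) * (f3%:~R) * k1 * l1 * l1 + (-8) * (f0%:~R) * (f2%:~R) * (f4%:~R) * k1 * l1 * l1 + 2 * (f1%:~R) * (f1%:~R) * k1 * l1 * l2 + (-8) * (f0%:~R) * (f2%:~R) * k1 * l1 * l2 + (-4) * (f0%:~R) * (f3%:~R) * k1 * l1 * l3 + (f1%:~R) * (f3%:~R) * k1 * l1 * l4 + (-4) * (f0%:~R) * (f4%:~R) * k1 * l1 * l4 + (-2) * (f0%:~R) * k1 * l2 * l4 + 2 * (f0%:~R) * k1 * l3 * l3 + 2 * (f1%:~R) * (f1%:~R) * k2 * l1 * l1 + (-8) * (f0%:~R) * (f2%:~R) * k2 * l1 * l1 + (-4) * (f0%:~R) * (f3%:~R) * k2 * l1 * l2 + (-1) * (f1%:~R) * (f3%:~R) * k2 * l1 * l3 + (-4) * (f0%:~R) * (f4%:~R) * k2 * l1 * l3 + (-6) * (f0%:~R) * k2 * l1 * l4 + (-2) * (f0%:~R)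 * k2 * l2 * l3 + (-1) * (f1%:~R) * k2 * l2 * l4 + (-4) * (f0%:~R) * (f3%:~R) * k3 * l1 * l1 + (-1) * (f1%:~R) * (f3%:~R) * k3 * l1 * l2 + (-4) * (f0%:~R) * (f4%:~R) * k3 * l1 * l2 + (-4) * (f1%:~R) * (f4%:~R) * k3 * l1 * l3 + 4 * (f0%:~R) * k3 * l1 * l3 + (-2) * (f1%:~R) * k3 * l1 * l4 + (-2) * (f0%:~R) * k3 * l2 * l2 + (-2) * (f1%:~R) * k3 * l2 * l3 + (-2) * (f2%:~R) * k3 * l2 * l4 + (-1) * (f3%:~R) * k3 * l3 * l4 + (f1%:~R) * (f3%:~R) * k4 * l1 * l1 + (-4) * (f0%:~R) * (f4%:~R) * k4 * l1 * l1 + (-6) * (f0%:~R) * k4 * l1 * l2 + (-2) * (f1%:~R) * k4 * l1 * l3 + 2 * (f2%:~R) * k4 * l1 * l4 + k4 * l4 * l4)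
  + k2 * ((-2) * (f0%:~R) * k2 * l1 * l3 + 2 * (f0%:~R) * k2 * l2 * l2 + (f1%:~R) * k2 * l2 * l3 + (-2) * (f0%:~R) * k3 * l1 * l2 + (-2) * (f1%:~R) * k3 * l1 * l3 + (f1%:~R) * k3 * l2 * l2 + 2 * (f2%:~R) * k3 * l2 * l3 + (f3%:~R) * k3 * l3 * l3 + (-2) * (f0%:~R) * k4 * l1 * l1 + (-1) * (f1%:~R) * k4 * l1 * l2 + (-2) * (f2%:~R) * k4 * l1 * l3 + (-1) * k4 * l3 * l4)
  + k3 * (2 * (f0%:~R) * k3 * l1 * l1 + (f3%:~R) * k3 * l2 * l3 + 2 * (f4%:~R) * k3 * l3 * l3 + 2 * k3 * l3 * l4 + (-1) * (f3%:~R) * k4 * l1 * l3 + (-1) * k4 * l2 * l4 + 2 * k4 * l3 * l3)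
  + l1 * (k4 * k4 * l4).
Proof. rewrite /B14 /=; ring. Qed.

Lemma B24_dec (f0 f1 f2 f3 f4 : int) (k1 k2 k3 k4 l1 l2 l3 l4 : R) :
  B24 f0 f1 f2 f3 f4 k1 k2 k3 k4 l1 l2 l3 l4 =
  k1 * ((-1) * (f1%:~R) * (f1%:~R) * (f3%:~R) * k1 * l1 * l1 + 4 * (f0%:~R) * (f2%:~R) * (f3%:~R) * k1 * l1 * l1 + 8 * (f0%:~R) * (f0%:~R) * k1 * l1 * l1 + 2 * (f0%:~R) * (f3%:~R) * (f3%:~R) * k1 * l1 * l2 + 4 * (f0%:~R) * (f1%:~R) * k1 * l1 * l2 + 4 * (f1%:~R) * (f1%:~R) * k1 * l1 * l3 + 4 * (f0%:~R) * (f3%:~R) * (f4%:~R) * k1 * l1 * l3 + (-8) * (f0%:~R) * (f2%:~R) * k1 * l1 * l3 + 4 * (f0%:~R) * (f3%:~R) * k1 * l1 * l4 + (f1%:~R) * (f3%:~R) * k1 * l2 * l4 + (-1) * (f1%:~R) * (f3%:~R) * k1 * l3 * l3 + 2 * (f0%:~R) * (f3%:~R) * (f3%:~R) * k2 * l1 * l1 + 4 * (f0%:~R) * (f1%:~R) * k2 * l1 * l1 + 2 * (f1%:~R) * (f1%:~R) * k2 * l1 * l2 + 4 * (f0%:~R) * (f3%:~R) * (f4%:~R) * k2 * l1 * l2 + 4 * (f1%:~R) * (f2%:~R) * k2 * l1 * l3 + 8 * (f0%:~R) * (f4%:~R) * (f4%:~R) * k2 * l1 * l3 + (-8) * (f0%:~R)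 * (f3%:~R) * k2 * l1 * l3 + (f1%:~R) * (f3%:~R) * k2 * l1 * l4 + 4 * (f0%:~R) * (f4%:~R) * k2 * l1 * l4 + 2 * (f0%:~R) * (f3%:~R) * k2 * l2 * l2 + (f1%:~R) * (f3%:~R) * k2 * l2 * l3 + 4 * (f0%:~R) * (f4%:~R) * k2 * l2 * l3 + 2 * (f1%:~R) * (f4%:~R) * k2 * l2 * l4 + 4 * (f0%:~R) * k2 * l3 * l3 + 2 * (f1%:~R) * k2 * l3 * l4 + 4 * (f1%:~R) * (f1%:~R) * k3 * l1 * l1 + 4 * (f0%:~R) * (f3%:~R) * (f4%:~R) * k3 * l1 * l1 + (-8) * (f0%:~R) * (f2%:~R) * k3 * l1 * l1 + 4 * (f1%:~R) * (f2%:~R) * k3 * l1 * l2 + 8 * (f0%:~R) * (f4%:~R) * (f4%:~R) * k3 * l1 * l2 + (-8) * (f0%:~R) * (f3%:~R) * k3 * l1 * l2 + (f3%:~R) * (f3%:~R) * (f3%:~R) * k3 * l1 * l3 + (-4) * (f2%:~R) * (f3%:~R) * (f4%:~R) * k3 * l1 * l3 + 8 * (f2%:~R) * (f2%:~R) * k3 * l1 * l3 + 8 * (f1%:~R) * (f4%:~R) * (f4%:~R) * k3 * l1 * l3 + (-8) * (f1%:~R) * (f3%:~R) * k3 * l1 * l3 + 4 * (f1%:~R) * (f4%:~R) * k3 * l1 * l4 + (-4) * (f0%:~R) * k3 * l1 * l4 + 4 * (f0%:~R) * (f4%:~R) * k3 * l2 * l2 + 4 * (f1%:~R) * (f4%:~R)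 * k3 * l2 * l3 + 4 * (f0%:~R) * k3 * l2 * l3 + (-1) * (f3%:~R) * (f3%:~R) * k3 * l2 * l4 + 4 * (f2%:~R) * (f4%:~R) * k3 * l2 * l4 + 4 * (f1%:~R) * k3 * l3 * l3 + 4 * (f2%:~R) * k3 * l3 * l4 + 4 * (f0%:~R) * (f3%:~R) * k4 * l1 * l1 + (f1%:~R) * (f3%:~R) * k4 * l1 * l2 + 4 * (f0%:~R) * (f4%:~R) * k4 * l1 * l2 + 4 * (f1%:~R) * (f4%:~R) * k4 * l1 * l3 + (-4) * (f0%:~R) * k4 * l1 * l3 + 2 * (f1%:~R) * k4 * l1 * l4 + 2 * (f0%:~R) * k4 * l2 * l2 + 2 * (f1%:~R) * k4 * l2 * l3 + 2 * (f2%:~R) * k4 * l2 * l4 + (f3%:~R) * k4 * l3 * l4)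
  + k2 * (2 * (f0%:~R) * (f3%:~R) * k2 * l1 * l2 + 4 * (f0%:~R) * (f4%:~R) * k2 * l1 * l3 + 2 * (f0%:~R) * k2 * l1 * l4 + 2 * (f0%:~R) * k2 * l2 * l3 + (f1%:~R) * k2 * l2 * l4 + (f1%:~R) * (f3%:~R) * k3 * l1 * l2 + 4 * (f0%:~R) * (f4%:~R) * k3 * l1 * l2 + 4 * (f1%:~R) * (f4%:~R) * k3 * l1 * l3 + 4 * (f0%:~R) * k3 * l1 * l3 + 2 * (f1%:~R) * k3 * l1 * l4 + 2 * (f0%:~R) * k3 * l2 * l2 + 2 * (f1%:~R) * k3 * l2 * l3 + 2 * (f2%:~R) * k3 * l2 * l4 + (f3%:~R) * k3 * l3 * l4 + (f1%:~R) * (f3%:~R) * k4 * l1 * l1 + 2 * (f1%:~R) * (f4%:~R) * k4 * l1 * l2 + (-1) * (f3%:~R) * (f3%:~R) * k4 * l1 * l3 + 4 * (f2%:~R) * (f4%:~R) * k4 * l1 * l3 + 2 * (f2%:~R) * k4 * l1 * l4 + (f1%:~R) * k4 * l2 * l2 + 2 * (f2%:~R) * k4 * l2 * l3 + (f3%:~R) * k4 * l2 * l4 + (f3%:~R) * k4 * l3 * l3 + 2 * (f4%:~R) * k4 * l3 * l4 + k4 * l4 * l4)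
  + k3 * ((-1) * (f1%:~R) * (f3%:~R) * k3 * l1 * l1 + 4 * (f0%:~R) * k3 * l1 * l2 + 4 * (f1%:~R) * k3 * l1 * l3 + (f3%:~R) * k3 * l2 * l4 + (-1) * (f3%:~R) * k3 * l3 * l3 + 2 * (f1%:~R) * k4 * l1 * l2 + 4 * (f2%:~R) * k4 * l1 * l3 + (f3%:~R) * k4 * l1 * l4 + (f3%:~R) * k4 * l2 * l3 + 2 * (f4%:~R) * k4 * l2 * l4 + 2 * k4 * l3 * l4)
  + l2 * (k4 * k4 * l4).
Proof. rewrite /B24 /=; ring. Qed.

Lemma B34_dec (f0 f1 f2 f3 f4 : int) (k1 k2 k3 k4 l1 l2 l3 l4 : R) :
  B34 f0 f1 f2 f3 f4 k1 k2 k3 k4 l1 l2 l3 l4 =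
  k1 * (2 * (f1%:~R) * (f1%:~R) * (f2%:~R) * k1 * l1 * l1 + (-8) * (f0%:~R) * (f2%:~R) * (f2%:~R) * k1 * l1 * l1 + 4 * (f0%:~R) * (f1%:~R) * (f3%:~R) * k1 * l1 * l1 + (-8) * (f0%:~R) * (f0%:~R) * (f4%:~R) * k1 * l1 * l1 + (f1%:~R) * (f1%:~R) * (f3%:~R) * k1 * l1 * l2 + (-4) * (f0%:~R) * (f2%:~R) * (f3%:~R) * k1 * l1 * l2 + (-8) * (f0%:~R) * (f0%:~R) * k1 * l1 * l2 + (-2) * (f0%:~R) * (f3%:~R) * (f3%:~R) * k1 * l1 * l3 + (-4) * (f0%:~R) * (f1%:~R) * k1 * l1 * l3 + 2 * (f1%:~R) * (f1%:~R) * k1 * l1 * l4 + (-8) * (f0%:~R) * (f2%:~R) * k1 * l1 * l4 + (-2) * (f0%:~R) * (f3%:~R) * k1 * l2 * l4 + 2 * (f0%:~R) * (f3%:~R) * k1 * l3 * l3 + (f1%:~R) * (f1%:~R) * (f3%:~R) * k2 * l1 * l1 + (-4) * (f0%:~R) * (f2%:~R) * (f3%:~R) * k2 * l1 * l1 + (-8) * (f0%:~R) * (f0%:~R) * k2 * l1 * l1 + 2 * (f1%:~R) * (f1%:~R) * (f4%:~R) * k2 * l1 * l2 + (-8) * (f0%:~R) * (f2%:~R) * (f4%:~R) * k2 * l1 * l2 + (-4) * (f0%:~R) * (f1%:~R) * k2 * l1 * l2 + (-2) * (f1%:~R) * (f1%:~R) * k2 * l1 * l3 + (-4) * (f0%:~R)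 * (f3%:~R) * (f4%:~R) * k2 * l1 * l3 + (-4) * (f0%:~R) * (f3%:~R) * k2 * l1 * l4 + (f1%:~R) * (f1%:~R) * k2 * l2 * l2 + (-4) * (f0%:~R) * (f2%:~R) * k2 * l2 * l2 + (-4) * (f0%:~R) * (f3%:~R) * k2 * l2 * l3 + (-4) * (f0%:~R) * (f4%:~R) * k2 * l2 * l4 + (-4) * (f0%:~R) * k2 * l3 * l4 + (-2) * (f0%:~R) * (f3%:~R) * (f3%:~R) * k3 * l1 * l1 + (-4) * (f0%:~R) * (f1%:~R) * k3 * l1 * l1 + (-2) * (f1%:~R) * (f1%:~R) * k3 * l1 * l2 + (-4) * (f0%:~R) * (f3%:~R) * (f4%:~R) * k3 * l1 * l2 + (-4) * (f1%:~R) * (f2%:~R) * k3 * l1 * l3 + (-8) * (f0%:~R) * (f4%:~R) * (f4%:~R) * k3 * l1 * l3 + 8 * (f0%:~R) * (f3%:~R) * k3 * l1 * l3 + (-1) * (f1%:~R) * (f3%:~R) * k3 * l1 * l4 + (-4) * (f0%:~R) * (f4%:~R) * k3 * l1 * l4 + (-2) * (f0%:~R) * (f3%:~R) * k3 * l2 * l2 + (-1) * (f1%:~R) * (f3%:~R) * k3 * l2 * l3 + (-4) * (f0%:~R) * (f4%:~R) * k3 * l2 * l3 + (-2) * (f1%:~R) * (f4%:~R) * k3 * l2 * l4 + (-4) * (f0%:~R) * k3 * l3 * l3 + (-2) * (f1%:~R) * k3 * l3 * l4 + 2 * (f1%:~R) * (f1%:~R) * k4 * l1 * l1 + (-8) *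 (f0%:~R) * (f2%:~R) * k4 * l1 * l1 + (-4) * (f0%:~R) * (f3%:~R) * k4 * l1 * l2 + (-1) * (f1%:~R) * (f3%:~R) * k4 * l1 * l3 + (-4) * (f0%:~R) * (f4%:~R) * k4 * l1 * l3 + (-6) * (f0%:~R) * k4 * l1 * l4 + (-2) * (f0%:~R) * k4 * l2 * l3 + (-1) * (f1%:~R) * k4 * l2 * l4)
  + k2 * ((f1%:~R) * (f1%:~R) * k2 * l1 * l2 + (-4) * (f0%:~R) * (f2%:~R) * k2 * l1 * l2 + (-2) * (f0%:~R) * (f3%:~R) * k2 * l1 * l3 + (-2) * (f0%:~R) * k2 * l2 * l4 + 2 * (f0%:~R) * k2 * l3 * l3 + (-4) * (f0%:~R) * (f3%:~R) * k3 * l1 * l2 + (-1) * (f1%:~R) * (f3%:~R) * k3 * l1 * l3 + (-4) * (f0%:~R) * (f4%:~R) * k3 * l1 * l3 + (-2) * (f0%:~R) * k3 * l1 * l4 + 2 * (f0%:~R) * k3 * l2 * l3 + (-1) * (f1%:~R) * k3 * l2 * l4 + 2 * (f1%:~R) * k3 * l3 * l3 + (-2) * (f0%:~R) * (f3%:~R) * k4 * l1 * l1 + (-4) * (f0%:~R) * (f4%:~R) * k4 * l1 * l2 + (-2) * (f1%:~R) * (f4%:~R) * k4 * l1 * l3 + (-1) * (f1%:~R) * k4 * l1 * l4 + (-2) * (f0%:~R) * k4 * l2 * l2 + (-1) * (f1%:~R) * k4 * l2 * l3)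
  + k3 * (2 * (f0%:~R) * (f3%:~R) * k3 * l1 * l1 + (-4) * (f0%:~R) * k3 * l1 * l3 + 2 * (f0%:~R) * k3 * l2 * l2 + 2 * (f1%:~R) * k3 * l2 * l3 + 2 * (f2%:~R) * k3 * l3 * l3 + (f3%:~R) * k3 * l3 * l4 + (-4) * (f0%:~R) * k4 * l1 * l2 + (-2) * (f1%:~R) * k4 * l1 * l3 + (f3%:~R) * k4 * l3 * l3 + 2 * (f4%:~R) * k4 * l3 * l4 + k4 * l4 * l4)
  + l3 * (k4 * k4 * l4).
Proof. rewrite /B34 /=; ring. Qed.

Lemma Kummer_dec (f0 f1 f2 f3 f4 : int) (k1 k2 k3 k4 : R) :
  Kummer f0 f1 f2 f3 f4 k1 k2 k3 k4 =
  k2 * k2 * (k4 ^+ 2) + k1 * k3 * ((-4) * k4 ^+ 2)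
 + k1 * k1 * ((-2) * k4 * (2 * f0%:~R * k1 + f1%:~R * k2 + 2 * f2%:~R * k3))
 + k1 * k2 * ((-2) * k4 * f3%:~R * k3)
 + k1 * k3 * ((-4) * k4 * f4%:~R * k3)
 + k2 * k3 * ((-2) * k4 * k3)
 + k1 * k1 * ((f1%:~R ^+ 2 - 4 * f0%:~R * f2%:~R) * k1 ^+ 2 - 4 * f0%:~R * f3%:~R * k1 * k2
     - 2 * f1%:~R * f3%:~R * k1 * k3 - 4 * f0%:~R * f4%:~R * k2 ^+ 2
     + 4 * (f0%:~R - f1%:~R * f4%:~R) * k2 * k3
     + (f3%:~R ^+ 2 + 2 * f1%:~R - 4 * f2%:~R * f4%:~R) * k3 ^+ 2)
 + k1 * k2 * ((-4) * f0%:~R * k2 ^+ 2 - 4 * f1%:~R * k2 * k3 - 4 * f2%:~R * k3 ^+ 2)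
 + k1 * k3 * ((-2) * f3%:~R * k3 ^+ 2)
 + k3 * k3 * (k3 ^+ 2).
Proof. rewrite /Kummer /=; ring. Qed.
End Dec.

Notation ZK := {mpoly int[4]}.

Section Ideal.
Implicit Types p q : ZK.

Lemma in_I0 : in_I 0.
Proof. by exists (fun _ => 0); rewrite big1 // => j _; rewrite mul0r. Qed.

Lemma in_ID p q : in_I p -> in_I q -> in_I (p + q).
Proof.
move=> [a ->] [b ->]; exists (fun j => a j + b j); rewrite -big_split.
by apply: eq_bigr => j _; rewrite mulrDl.
Qed.

Lemma in_IN p : in_I p -> in_I (- p).
Proof.
move=> [a ->]; exists (fun j => - a j); rewrite -sumrN.
by apply: eq_bigr => j _; rewrite mulNr.
Qed.

Lemma in_IB p q : in_I p -> in_I q -> in_I (p - q).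
Proof. by move=> ? ?; apply: in_ID => //; apply: in_IN. Qed.

Lemma in_IMl q p : in_I p -> in_I (q * p).
Proof.
move=> [a ->]; exists (fun j => q * a j); rewrite mulr_sumr.
by apply: eq_bigr => j _; rewrite mulrA.
Qed.

Lemma in_IMr p q : in_I p -> in_I (p * q).
Proof. by rewrite mulrC; apply: in_IMl. Qed.

Lemma in_I_kvar (j : 'I_3) : in_I (kvar j).
Proof.
exists (fun l => (l == j)%:R); rewrite (bigD1 j) //= eqxx mul1r big1 ?addr0 //.
by move=> l /negbTE ->; rewrite mul0r.
Qed.

Lemma in_I_kvarn j : (j < 3)%N -> in_I (kvar j).
Proof. by move=> Hj; exact: (in_I_kvar (Ordinal Hj)). Qed.

Lemma in_I20 : in_I2 0.
Proof.
exists (fun _ _ => 0); rewrite big1 // => j _; rewrite big1 // => l _.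
by rewrite mul0r.
Qed.

Lemma in_I2D p q : in_I2 p -> in_I2 q -> in_I2 (p + q).
Proof.
move=> [a ->] [b ->]; exists (fun j l => a j l + b j l); rewrite -big_split.
apply: eq_bigr => j _; rewrite -big_split.
by apply: eq_bigr => l _; rewrite mulrDl.
Qed.

Lemma in_I2N p : in_I2 p -> in_I2 (- p).
Proof.
move=> [a ->]; exists (fun j l => - a j l); rewrite -sumrN.
apply: eq_bigr => j _; rewrite -sumrN.
by apply: eq_bigr => l _; rewrite mulNr.
Qed.

Lemma in_I2B p q : in_I2 p -> in_I2 q -> in_I2 (p - q).
Proof. by move=> ? ?; apply: in_I2D => //; apply: in_I2N. Qed.

Lemma in_I2Ml q p : in_I2 p -> in_I2 (q * p).
Proof.
move=> [a ->]; exists (fun j l => q * a j l); rewrite mulr_sumr.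
apply: eq_bigr => j _; rewrite mulr_sumr.
by apply: eq_bigr => l _; rewrite mulrA.
Qed.

Lemma in_I2Mr p q : in_I2 p -> in_I2 (p * q).
Proof. by rewrite mulrC; apply: in_I2Ml. Qed.

Lemma in_I2_mul p q : in_I p -> in_I q -> in_I2 (p * q).
Proof.
move=> [a ->] [b ->]; exists (fun j l => a j * b l).
rewrite mulr_suml; apply: eq_bigr => j _; rewrite mulr_sumr.
by apply: eq_bigr => l _; rewrite mulrACA.
Qed.

Lemma in_I2_mul3 p q r : in_I p -> in_I q -> in_I2 (p * q * r).
Proof. by move=> ? ?; apply: in_I2Mr; apply: in_I2_mul. Qed.

Lemma in_I2_I p : in_I2 p -> in_I p.
Proof.
move=> [a ->]; exists (fun j => \sum_(l < 3) a j l * kvar l).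
apply: eq_bigr => j _; rewrite mulr_suml; apply: eq_bigr => l _.
by rewrite -!mulrA (mulrC (kvar j)).
Qed.

Lemma in_I2_prod a b c d : in_I2 (a - b) -> in_I2 (c - d) -> in_I2 (a * c - b * d).
Proof.
move=> H1 H2; have -> : a * c - b * d = (a - b) * c + b * (c - d) by ring.
by apply: in_I2D; [apply: in_I2Mr | apply: in_I2Ml].
Qed.

Lemma in_I2_exp a b n : in_I2 (a - b) -> in_I2 (a ^+ n - b ^+ n).
Proof.
move=> H; elim: n => [|n IH]; first by rewrite !expr0 subrr; apply: in_I20.
by rewrite !exprS; apply: in_I2_prod.
Qed.

Definition dm (m : 'X_{1..4}) : nat := (m (inord 0) + m (inord 1) + m (inord 2))%N.

Lemma dmD m1 m2 : dm (m1 + m2)%MM = (dm m1 + dm m2)%N.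
Proof. rewrite /dm !mnmDE; lia. Qed.

Lemma dmU (j : nat) : (j < 4)%N -> dm U_(inord j)%MM = (j < 3)%N.
Proof.
rewrite /dm !mnm1E.
by case: j => [|[|[|[|]]]] //= _; rewrite -!val_eqE /= !inordK.
Qed.


Definition cI (p : ZK) := forall m, dm m = 0%N -> p@_m = 0.
Definition cI2 (p : ZK) := forall m, (dm m < 2)%N -> p@_m = 0.

Lemma coefMX_low (p : ZK) u m : (p * 'X_[u])@_m != 0 -> (dm u <= dm m)%N.
Proof.
rewrite -mcoeff_msupp (perm_mem (msuppMX p u)) => /mapP [m' _ ->].
by rewrite dmD leq_addr.
Qed.

Lemma kvarE j : (j < 4)%N -> kvar j = 'X_[U_(inord j)] :> ZK.
Proof. by []. Qed.

Lemma in_I2_c p : in_I2 p -> cI2 p.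
Proof.
move=> [a ->] m Hm; rewrite raddf_sum big1 // => j _.
rewrite raddf_sum big1 // => l _.
rewrite /kvar -mpolyXD; apply/eqP; apply: contraTT Hm => /coefMX_low.
have hj : (j < 4)%N by rewrite (ltn_trans (ltn_ord j)).
have hl : (l < 4)%N by rewrite (ltn_trans (ltn_ord l)).
by rewrite dmD (dmU hj) (dmU hl) !ltn_ord -leqNgt.
Qed.

Lemma cI2_divI (j : nat) p : (j < 3)%N -> cI2 (kvar j * p) -> cI p.
Proof.
move=> Hj H m Hm; have Hj4 : (j < 4)%N by apply: ltn_trans Hj _.
rewrite -(mcoeffMX p U_(inord j)) mulrC; apply: H.
by rewrite dmD dmU // Hj Hm.
Qed.

Lemma cI2_divI2 p : cI2 (kvar 3 * p) -> cI2 p.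
Proof.
move=> H m Hm; rewrite -(mcoeffMX p U_(inord 3)) mulrC; apply: H.
by rewrite dmD dmU.
Qed.

Lemma mono_split (m : 'X_{1..4}) (j : 'I_4) :
  (0 < m j)%N -> 'X_[m] = 'X_[(m - U_(j))%MM] * 'X_j :> ZK.
Proof.
move=> Hm; rewrite -mpolyXD submK //; apply/mnm_lepP => i; rewrite mnm1E.
by case: eqP => [<-|].
Qed.

Lemma mono_I (m : 'X_{1..4}) : (0 < dm m)%N -> in_I 'X_[m].
Proof.
move=> H.
have [j [Hj Hmj]] : exists j, (j < 3)%N /\ (0 < m (inord j))%N.
  move: H; rewrite /dm.
  have [h0|h0] := posnP (m (inord 0)); last by exists 0%N.
  have [h1|h1] := posnP (m (inord 1)); last by exists 1%N.
  have [h2|h2] := posnP (m (inord 2)); last by exists 2%N.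
  by rewrite h0 h1 h2.
by rewrite (mono_split Hmj); apply: in_IMl; apply: in_I_kvarn.
Qed.

Lemma mono_I2 (m : 'X_{1..4}) : (1 < dm m)%N -> in_I2 'X_[m].
Proof.
move=> H.
have [j [Hj Hmj]] : exists j, (j < 3)%N /\ (0 < m (inord j))%N.
  move: H; rewrite /dm.
  have [h0|h0] := posnP (m (inord 0)); last by exists 0%N.
  have [h1|h1] := posnP (m (inord 1)); last by exists 1%N.
  have [h2|h2] := posnP (m (inord 2)); last by exists 2%N.
  by rewrite h0 h1 h2.
rewrite (mono_split Hmj); apply: in_I2_mul; last exact: in_I_kvarn.
apply: mono_I.
have Hle : (U_(inord j) <= m)%MM.
  by apply/mnm_lepP => i; rewrite mnm1E; case: eqP => [<-|].
move: H; rewrite -{1}(submK Hle) dmD dmU ?Hj //; last by apply: ltn_trans Hj _.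
by move=> H; rewrite addn1 in H.
Qed.

Lemma cI_in_I p : cI p -> in_I p.
Proof.
move=> H; rewrite (mpolyE p) big_seq; apply: (big_ind in_I) => //.
- exact: in_I0.
- exact: in_ID.
move=> m; rewrite mcoeff_msupp => Hm; rewrite -mul_mpolyC; apply: in_IMl.
apply: mono_I; rewrite lt0n; apply: contra Hm => /eqP Hd.
by rewrite H.
Qed.

Lemma cI2_in_I2 p : cI2 p -> in_I2 p.
Proof.
move=> H; rewrite (mpolyE p) big_seq; apply: (big_ind in_I2) => //.
- exact: in_I20.
- exact: in_I2D.
move=> m; rewrite mcoeff_msupp => Hm; rewrite -mul_mpolyC; apply: in_I2Ml.
apply: mono_I2; rewrite ltnNge; apply: contra Hm => Hd.
by rewrite H // ltnS.
Qed.

Lemma divI j p : (j < 3)%N -> in_I2 (kvar j * p) -> in_I p.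
Proof. by move=> Hj /in_I2_c /(cI2_divI Hj) /cI_in_I. Qed.

Lemma divI2 p : in_I2 (kvar 3 * p) -> in_I2 p.
Proof. by move=> /in_I2_c /cI2_divI2 /cI2_in_I2. Qed.

End Ideal.

Definition Good (x : 'I_4 -> ZK) (M : nat) :=
  (forall j, (j < 3)%N -> in_I (x (inord j))) /\ in_I2 (x (inord 3) - kvar 3 ^+ M).

Lemma Kummer_I2 f0 f1 f2 f3 f4 : in_I2 (KummerZ f0 f1 f2 f3 f4).
Proof.
rewrite /KummerZ Kummer_dec; repeat apply: in_I2D; apply: in_I2_mul3;
  apply: in_I_kvarn => //.
Qed.

Lemma even_step f0 f1 f2 f3 f4 (x y : 'I_4 -> ZK) M :
  Good x M ->
  (forall i : 'I_4, congK f0 f1 f2 f3 f4 (y i) (delta f0 f1 f2 f3 f4 i x)) ->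
  Good y (4 * M).
Proof.
move=> [Hx Hx4] Hc.
have Hy : forall i, in_I2 (y i - delta f0 f1 f2 f3 f4 i x).
  by move=> i; have [g ->] := Hc i; apply: in_I2Ml; apply: Kummer_I2.
have X0 := Hx 0%N isT; have X1 := Hx 1%N isT; have X2 := Hx 2%N isT.
split.
- move=> j Hj.
  rewrite -(subrK (delta f0 f1 f2 f3 f4 (inord j) x) (y (inord j))).
  apply: in_ID; first exact: in_I2_I.
  move: Hj; case: j => [|[|[|]]] // _; rewrite /delta inordK //= /c4;
  rewrite ?B14_dec ?B24_dec ?B34_dec; apply: in_IMl;
  repeat apply: in_ID; apply: in_IMr; assumption.
- rewrite -(subrK (delta f0 f1 f2 f3 f4 (inord 3) x) (y (inord 3))) -addrA.
  apply: in_I2D; first exact: Hy.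
  rewrite /delta inordK //= /c4 B44_dec addrAC; apply: in_I2D; last first.
    by repeat apply: in_I2D; apply: in_I2_mul3; assumption.
  have E : forall a : ZK, a * a * a * a = a ^+ 4 by move=> a; ring.
  by rewrite E mulnC exprM; apply: in_I2_exp.
Qed.

Lemma odd_step f0 f1 f2 f3 f4 (x y z : 'I_4 -> ZK) A B N :
  Good x A -> Good y B -> (2 * A + 2 * B = N.+1)%N ->
  (forall i : 'I_4, congK f0 f1 f2 f3 f4 (z i * 'X_i) (Bdiag f0 f1 f2 f3 f4 i x y)) ->
  Good z N.
Proof.
move=> [Hx Hx4] [Hy Hy4] HN Hc.
have Hz : forall i, in_I2 (z i * 'X_i - Bdiag f0 f1 f2 f3 f4 i x y).
  by move=> i; have [g ->] := Hc i; apply: in_I2Ml; apply: Kummer_I2.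
have X0 := Hx 0%N isT; have X1 := Hx 1%N isT; have X2 := Hx 2%N isT.
have Y0 := Hy 0%N isT; have Y1 := Hy 1%N isT; have Y2 := Hy 2%N isT.
split.
- move=> j Hj; apply: (divI Hj); rewrite mulrC.
  rewrite -(subrK (Bdiag f0 f1 f2 f3 f4 (inord j) x y) (z (inord j) * kvar j)).
  apply: in_I2D; first exact: Hz.
  move: Hj; case: j => [|[|[|]]] // _; rewrite /Bdiag inordK //= /c4;
  rewrite ?B11_dec ?B22_dec ?B33_dec;
  repeat apply: in_I2D; apply: in_I2_mul3; assumption.
- apply: divI2.
  rewrite (_ : kvar 3 * (z (inord 3) - kvar 3 ^+ N) =
     (z (inord 3) * 'X_(inord 3) - Bdiag f0 f1 f2 f3 f4 (inord 3) x y)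
     + (Bdiag f0 f1 f2 f3 f4 (inord 3) x y - kvar 3 ^+ N.+1)); last first.
    by rewrite /kvar exprS; ring.
  apply: in_I2D; first exact: Hz.
  rewrite /Bdiag inordK //= /c4 B44_dec addrAC; apply: in_I2D; last first.
    by repeat apply: in_I2D; apply: in_I2_mul3; assumption.
  rewrite -HN exprD !mul2n -!addnn !exprD mulrA.
  by apply: in_I2_prod => //; apply: in_I2_prod => //; apply: in_I2_prod.
Qed.

Theorem lemma3p6 (f0 f1 f2 f3 f4 : int) (mu : nat -> 'I_4 -> {mpoly int[4]}) :
  genus2_quintic f0 f1 f2 f3 f4 ->
  uchida_seq f0 f1 f2 f3 f4 mu ->
  forall m : nat, (1 <= m)%N ->
    (forall i : 'I_4, (i < 3)%N -> in_I (mu m i)) /\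
    in_I2 (mu m (inord 3) - kvar 3 ^+ (m ^ 2)).
Proof.
move=> _ [H0 H1 Hev Hod].
suff Hm : forall m, (1 <= m)%N -> Good (mu m) (m ^ 2).
  move=> m /Hm [HI HI2]; split => // i Hi.
  by rewrite -(inord_val i); apply: HI.
elim/ltn_ind => m IH Hm1.
have [->|Hm2] := eqVneq m 1%N.
  split.
  - by move=> j Hj; rewrite H1; apply: in_I_kvarn.
  - by rewrite H1 expr1 /kvar subrr; apply: in_I20.
set k := m./2.
have Em : m = (odd m + k.*2)%N by rewrite odd_double_half.
have Hk1 : (1 <= k)%N.
  move: Hm1 Hm2 Em; case: (odd m) => /=; lia.
have Hkm : (k < m)%N by lia.
case Ho: (odd m) Em => /= Em.
- have Hk1m : (k.+1 < m)%N by lia.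
  rewrite Em add1n.
  apply: (odd_step (x := mu k.+1) (y := mu k) (A := (k.+1 ^ 2)%N) (B := (k ^ 2)%N)).
  + exact: IH.
  + exact: IH.
  + rewrite -!mul2n; nia.
  + by move=> i; apply: Hod.
- rewrite Em add0n (_ : (k.*2 ^ 2)%N = (4 * k ^ 2)%N); last first.
    by rewrite -mul2n expnMn.
  apply: (even_step (x := mu k)); first exact: IH.
  by move=> i; apply: Hev.
Qed.
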